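(* For every positive integer $n$, \[ \sum_{k=1}^{n}(4k+1)\frac{(\tfrac{1}{2})_k^3}{k!^3}\frac{(-n)_k}{(\tfrac{3}{2}+n)_k}\sum_{i=1}^{2k}\frac{(-1)^i}{i^2} =\frac{(\tfrac{1}{2})_n(\tfrac{3}{2})_n}{n!^2}\sum_{j=1}^{n}\frac{1}{4j^2}. \]
   Context: For a complex number $x$ and a nonnegative integer $n$, $(x)_n=x(x+1)\cdots(x+n-1)$ denotes the shifted factorial (Pochhammer symbol), with $(x)_0=1$. *)

(* Defs.v *)
From mathcomp Require Import all_boot all_order all_algebra.
Set Implicit Arguments. Unset Strict Implicit. Unset Printing Implicit Defensive.
Import Order.TTheory GRing.Theory Num.Theory.
Local Open Scope ring_scope.

Definition poch {R : pzRingType} (x : R) (n : nat) : R :=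
  \prod_(i < n) (x + i%:R).

(* Main.v *)
Require Import Defs.
From mathcomp Require Import all_boot all_order all_algebra.
From mathcomp Require Import ring lra.
Import Order.TTheory GRing.Theory Num.Theory.
Local Open Scope ring_scope.

Lemma poch0 (y : rat) : poch y 0 = 1.
Proof. by rewrite /poch big_ord0. Qed.

Lemma pochS (y : rat) k : poch y k.+1 = poch y k * (y + k%:R).
Proof. by rewrite /poch big_ord_recr. Qed.

Lemma poch_gt0 (y : rat) k : 0 < y -> 0 < poch y k.
Proof.
move=> hy; elim: k => [|k IH]; first by rewrite poch0 ltr01.
rewrite pochS mulr_gt0 //. have := ler0n rat k. lra.
Qed.

Lemma poch_zero (n k : nat) : (n < k)%N -> poch (- n%:R : rat) k = 0.
Proof.
move=> h; rewrite /poch (bigD1 (Ordinal h)) //= addNr mul0r //.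
Qed.

Definition a k : rat := poch (1/2) k / k`!%:R.
Definition F (n k : nat) : rat :=
  (4 * k + 1)%:R * a k ^+ 3 * poch (- n%:R) k / poch (3/2 + n%:R) k.
Definition rho (x y : rat) := (4*y+5)/(4*y+1) * ((1/2+y)/(y+1))^+3 * (y - x)/(3/2+x+y).
Definition sig (x y : rat) := (y-1-x)/(-1-x) * (3/2+x+y)/(3/2+x).

Lemma FS n k : F n k.+1 = F n k * rho n%:R k%:R.
Proof.
rewrite /F /a /rho !pochS factS.
have e1 : (k.+1)%:R = k%:R + 1 :> rat by rewrite natr1.
rewrite natrM e1 natrD natrM e1 natrD natrM.
have hk := ler0n rat k. have hn := ler0n rat n.
have hf : k`!%:R != 0 :> rat by rewrite pnatr_eq0 -lt0n fact_gt0.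
have hD : poch (3/2 + n%:R : rat) k != 0.
  have h1 : 0 < 3/2 + n%:R :> rat by lra.
  have h2 := @poch_gt0 _ k h1. lra.
set P := poch (1/2) k. set D := poch (3 / 2 + n%:R) k.
field. repeat (apply/andP; split); try done; lra.
Qed.

Ltac side := repeat (apply/andP; split); try done; lra.
Ltac sidenk n k := have hn0 : 0 <= n%:R :> rat := ler0n _ n; have hk0 : 0 <= k%:R :> rat := ler0n _ k; side.

Lemma F0 n : F n 0 = 1.
Proof. by rewrite /F /a !poch0 /= divr1 mulr1 div1r invr1. Qed.

Lemma natS k : (k.+1)%:R = k%:R + 1 :> rat.
Proof. by rewrite natr1. Qed.

Lemma FSig n k : F n k = F n.+1 k * sig n%:R k%:R.
Proof.
have hn := ler0n rat n.
elim: k => [|k IH].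
  rewrite !F0 mul1r /sig addr0 sub0r divff; last lra.
  rewrite mul1r divff //; lra.
rewrite !FS IH; clear IH; move: (F n.+1 k) => X.
rewrite /rho /sig [n.+1%:R]natS [k.+1%:R]natS.
clear hn. field. sidenk n k.
Qed.

Definition H k : rat := \sum_(1 <= i < (2 * k).+1) (-1) ^+ i / (i%:R ^+ 2).
Definition d (y : rat) := 1 / (2*y+2)^+2 - 1 / (2*y+1)^+2.

Lemma H0 : H 0 = 0.
Proof. by rewrite /H big_geq. Qed.

Lemma HS k : H k.+1 = H k + d k%:R.
Proof.
rewrite /H (_ : (2 * k.+1).+1 = (2 * k).+3)%N; last by rewrite mulnS.
rewrite big_nat_recr // big_nat_recr //= -addrA; congr (_ + _).
have s : (-1:rat)^+(2*k) = 1 by rewrite exprM sqrrN !expr1n.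
rewrite /d !exprS s.
have e2 : ((2*k).+2)%:R = 2 * k%:R + 2 :> rat by rewrite -natr1 -natr1 natrM; ring.
have e3 : ((2*k).+1)%:R = 2 * k%:R + 1 :> rat by rewrite -natr1 natrM.
rewrite e2 e3. have hk := ler0n rat k. field. side.
Qed.

Definition c (x : rat) := (x + 1/2) * (x + 3/2) / (x + 1)^+2.
Definition E n j : rat :=
  F n j * (j%:R + 1/2)^+3 / ((4 * j%:R + 1) * (n%:R + j%:R + 3/2)).
Definition Gt n k : rat :=
  match k with 0 => 0 | j.+1 => (2 * n%:R + 3) / (n%:R + 1)^+2 * E n j end.

Lemma rel1 n k : F n.+1 k - c n%:R * F n k = Gt n k.+1 - Gt n k.
Proof.
case: k => [|i].
  rewrite /Gt /E !F0 subr0 /c. field. sidenk n n.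
rewrite /Gt /E !FS (FSig n i) [n.+1%:R]natS [i.+1%:R]natS.
move: (F n.+1 i) => X.
rewrite /rho /sig /c. field. sidenk n i.
Qed.

Lemma abel (g h : nat -> rat) N : g 0%N = 0 ->
  \sum_(0 <= k < N) (g k.+1 - g k) * h k =
  g N * h N - \sum_(0 <= k < N) g k.+1 * (h k.+1 - h k).
Proof.
move=> g0; elim: N => [|N IH]; first by rewrite !big_geq // g0 mul0r subr0.
rewrite !big_nat_recr //= IH. ring.
Qed.

Definition e (x : rat) := (x + 3/2)^+2 / (x + 2)^+2.
Definition u n j : rat := E n j * d j%:R.
Definition rhop (x y : rat) := (4*y+5)/(4*y+1) * ((1/2+y)/(y+1))^+3 / (3/2+x+y).
Definition W n j : rat :=
  match j with 0 => 0 | i.+1 =>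
   - (2 * n%:R + 3) * (i%:R + 1) / (4 * (n%:R + 2)^+2 * (2 * i%:R + 3)^+2)
     * F n i * rhop n%:R i%:R * (i%:R + 3/2)^+3
     / ((4 * i%:R + 5) * (n%:R + i%:R + 5/2)) end.

Lemma rel2 n j : u n.+1 j - e n%:R * u n j = W n j.+1 - W n j.
Proof.
case: j => [|i].
  rewrite /u /W /E /d /rhop !F0 subr0 /e [n.+1%:R]natS. field. sidenk n n.
rewrite /u /W /E /d !FS (FSig n i) [n.+1%:R]natS [i.+1%:R]natS.
move: (F n.+1 i) => X.
rewrite /rho /rhop /sig /e. field. sidenk n i.
Qed.

Lemma Fzero n k : (n < k)%N -> F n k = 0.
Proof. by move=> h; rewrite /F poch_zero // mulr0 mul0r. Qed.

Definition C n : rat := poch (1/2) n * poch (3/2) n / (n`!%:R)^+2.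

Lemma CS n : C n.+1 = C n * c n%:R.
Proof.
rewrite /C /c !pochS factS natrM [n.+1%:R]natS.
have hf : n`!%:R != 0 :> rat by rewrite pnatr_eq0 -lt0n fact_gt0.
move: (poch (1/2) n) (poch (3/2) n) => P1 P2.
field. sidenk n n.
Qed.

Definition Q n : rat := \sum_(0 <= j < n.+2) u n j.

Lemma Qval n : Q n = - C n.+1 / (4 * (2 * n%:R + 3)).
Proof.
elim: n => [|n IH].
  rewrite /Q big_nat_recr // big_nat_recr // big_geq // add0r.
  rewrite /u /E (@Fzero 0 1) // F0 /C !pochS !poch0 /d /=.
  by apply/eqP; vm_compute.
have tel := @telescope_sumr_eq _ 0 n.+3 (fun j => W n j)
   (fun j => u n.+1 j - e n%:R * u n j) (leq0n _) (fun k _ => rel2 n k).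
have Qs : \sum_(0 <= i < n.+3) u n i = Q n.
  by rewrite big_nat_recr //= /u /E Fzero // !mul0r addr0.
have W3 : W n n.+3 = 0 by rewrite /W Fzero // !mulr0 !mul0r.
rewrite sumrB -mulr_sumr Qs W3 /= subr0 in tel.
have -> : Q n.+1 = e n%:R * Q n by apply/eqP; rewrite -subr_eq0 /Q tel.
rewrite IH [C n.+2]CS [n.+1%:R]natS /e /c.
move: (C n.+1) => X.
field. sidenk n n.
Qed.

Definition S n : rat := \sum_(0 <= k < n.+1) F n k * H k.
Definition hh n : rat := \sum_(1 <= j < n.+1) 1 / (4 * j%:R ^+ 2).

Lemma Sval n : S n = C n * hh n.
Proof.
elim: n => [|n IH].
  by rewrite /S /hh big_nat1 H0 mulr0 big_geq // mulr0.
have ab := abel (Gt n) H n.+2 erefl.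
have e1 : \sum_(0 <= k < n.+2) (Gt n k.+1 - Gt n k) * H k =
          \sum_(0 <= k < n.+2) F n.+1 k * H k - c n%:R * S n.
  have -> : S n = \sum_(0 <= k < n.+2) F n k * H k.
    by rewrite [in RHS]big_nat_recr //= (@Fzero n n.+1) // mul0r addr0.
  rewrite mulr_sumr -sumrB; apply: eq_bigr => k _; rewrite -rel1; ring.
have e2 : \sum_(0 <= k < n.+2) Gt n k.+1 * (H k.+1 - H k) =
          (2 * n%:R + 3) / (n%:R + 1)^+2 * Q n.
  rewrite /Q mulr_sumr; apply: eq_bigr => k _.
  rewrite HS /Gt /u /E (addrC (H k)) addrK; ring.
have G2 : Gt n n.+2 = 0 by rewrite /Gt /E Fzero // !mul0r mulr0.
rewrite e1 e2 G2 mul0r sub0r Qval IH in ab.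
have -> : S n.+1 = \sum_(0 <= k < n.+2) F n.+1 k * H k by [].
have -> : hh n.+1 = hh n + 1 / (4 * (n%:R + 1)^+2).
  by rewrite /hh big_nat_recr //= [n.+1%:R]natS.
rewrite CS.
move/eqP: ab; rewrite subr_eq => /eqP ->.
move: (C n.+1) (CS n) => Cn1 ->.
rewrite /c. move: (C n) (hh n) => X Y.
field. sidenk n n.
Qed.

Theorem mainTheorem7 (n : nat) : (0 < n)%N ->
  \sum_(1 <= k < n.+1)
     ((4 * k + 1)%:R * (poch (1/2 : rat) k) ^+ 3 / (k`!%:R) ^+ 3
        * poch (- n%:R) k / poch (3/2 + n%:R) k
        * \sum_(1 <= i < (2 * k).+1) (-1) ^+ i / (i%:R ^+ 2))
  = poch (1/2 : rat) n * poch (3/2 : rat) n / (n`!%:R) ^+ 2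
      * \sum_(1 <= j < n.+1) 1 / (4 * j%:R ^+ 2).
Proof.
move=> _.
have -> : \sum_(1 <= k < n.+1)
     ((4 * k + 1)%:R * (poch (1/2 : rat) k) ^+ 3 / (k`!%:R) ^+ 3
        * poch (- n%:R) k / poch (3/2 + n%:R) k
        * \sum_(1 <= i < (2 * k).+1) (-1) ^+ i / (i%:R ^+ 2)) = S n.
  rewrite /S [in RHS]big_ltn // H0 mulr0 add0r; apply: eq_bigr => k _.
  by rewrite /F /a /H expr_div_n !mulrA.
exact: Sval.
Qed.
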